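(* Let $(z_n)_{n\in\mathbb{N}}\subset\mathbb{C}$ and $(\lambda_n)_{n\in\mathbb{N}}\subset\mathbb{R}^+$ be sequences and let $x,c_1,c_2$ be positive reals. Let $T,T'\in[1,\infty)$ with $|T-T'|\le1$. Assume that for $t\ge1$, $$\sum_{\lambda_n\le t}|z_n|^2\ll t^{c_1}\qquad\text{and}\qquad\sum_{t<\lambda_n\le t+1}1\ll(\log t)^{c_2}.$$ Then $$\sum_{\lambda_n\le T'}\frac{z_nx^{\frac12+i\lambda_n}}{\frac12+i\lambda_n}=\sum_{\lambda_n\le T}\frac{z_nx^{\frac12+i\lambda_n}}{\frac12+i\lambda_n}+O\Big(x^{1/2}T^{(c_1-2)/2}(\log T)^{c_2/2}\Big).$$
   Context: $f\ll g$ means $|f|\le M|g|$ for some constant $M>0$. *)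

(* Defs.v *)
From mathcomp Require Import all_boot all_order all_algebra.
From mathcomp Require Import all_classical all_reals all_analysis.
From mathcomp Require Export complex.
Import GRing.Theory Num.Theory.
Local Open Scope ring_scope.
Local Open Scope complex_scope.

(* Complex power x^(a + i b) = x^a (cos (b ln x) + i sin (b ln x)) for x > 0. *)
Definition cpowr {R : realType} (x a b : R) : R[i] :=
  (x `^ a)%:C * (cos (b * ln x) +i* sin (b * ln x)).

Definition cabs {R : realType} (z : R[i]) : R := Normc.normc z.

Definition Ssum {R : realType} (z : nat -> R[i]) (lam : nat -> R) (x t : R) : R[i] :=
  \sum_(n \in [set n | lam n <= t]%classic)
     (z n * cpowr x (2^-1) (lam n) / (2^-1 +i* lam n)).

(* Main.v *)
Require Import Defs.
From mathcomp Require Import all_boot all_order all_algebra.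
From mathcomp Require Import all_classical all_reals all_analysis.
From mathcomp Require Import complex.
From mathcomp Require Import ring lra finmap.
Import Order.TTheory GRing.Theory Num.Theory.
Local Open Scope ring_scope.
Local Open Scope classical_set_scope.

Lemma fsum_widen (V : zmodType) (A B : set nat) (f : nat -> V) :
  finite_set B -> A `<=` B ->
  \sum_(n \in A) f n = \sum_(n <- fset_set B) (if n \in A then f n else 0).
Proof.
move=> Bf AB; rewrite fsbig_mkcond (fsbigTE (fset_set B)).
  by apply: eq_bigr => i _; rewrite /patch.
move=> i iB; rewrite /patch; case: ifPn => // /set_mem /AB Bi.
by move: iB; rewrite in_fset_set// mem_set.
Qed.

Lemma memsetb (P : pred nat) n : (n \in [set m | P m]) = P n.
Proof. by apply/idP/idP => [/set_mem|/mem_set]. Qed.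

Lemma normc_sum (R : realType) (r : seq nat) (F : nat -> R[i]) :
  Normc.normc (\sum_(n <- r) F n) <= \sum_(n <- r) Normc.normc (F n).
Proof.
elim: r => [|m r IH]; first by rewrite !big_nil Normc.normc0.
rewrite !big_cons; apply: le_trans (le_normcD _ _) _; exact: lerD.
Qed.

Lemma normc_term (R : realType) (w : R[i]) (x l : R) : 0 < x -> 0 < l ->
  Normc.normc (w * cpowr x (2^-1) l / (2^-1 +i* l)%C) <= Normc.normc w * x `^ (2^-1) / l.
Proof.
move=> x0 l0; rewrite /cpowr !Normc.normcM Normc.normcV.
have -> : Normc.normc ((x `^ 2^-1)%:C)%C = x `^ 2^-1.
  rewrite /Normc.normc /= expr0n /= addr0 sqrtr_sqr ger0_norm //; exact: powR_ge0.
have -> : Normc.normc (cos (l * ln x) +i* sin (l * ln x))%C = 1.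
  by rewrite /Normc.normc cos2Dsin2 sqrtr1.
rewrite mulr1 ler_wpM2l //.
  by rewrite mulr_ge0 ?powR_ge0 // /Normc.normc; case: w => a b; rewrite sqrtr_ge0.
rewrite lef_pV2 ?posrE //.
  rewrite /Normc.normc; apply: (le_trans (y := Num.sqrt (l ^+ 2))).
    by rewrite sqrtr_sqr gtr0_norm.
  by rewrite ler_wsqrtr // lerDr sqr_ge0.
by rewrite /Normc.normc sqrtr_gt0 ltr_wpDl ?sqr_ge0 // exprn_gt0.
Qed.

Lemma core (R : realType) (z : nat -> R[i]) (lam : nat -> R) (c1 c2 M1 M2 : R) :
  (forall n, 0 < lam n) -> 0 < c1 -> 0 < c2 ->
  (forall t : R, finite_set [set n | lam n <= t]) ->
  (forall t : R, 1 <= t ->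
     \sum_(n \in [set n | lam n <= t]) cabs (z n) ^+ 2 <= M1 * t `^ c1) ->
  (forall t : R, 1 <= t ->
     \sum_(n \in [set n | t < lam n <= t + 1]) (1 : R) <= M2 * (ln t) `^ c2) ->
  forall x T T' a : R, 0 < x -> 1 <= a -> a <= T <= a + 1 -> a <= T' <= a + 1 ->
  cabs (Ssum z lam x T' - Ssum z lam x T)
   <= (1 + 2 `^ ((c1 - 2) / 2)) * (`|M1| + `|M2|) *
      (x `^ 2^-1 * T `^ ((c1 - 2) / 2) * (ln T) `^ (c2 / 2)).
Proof.
move=> Hlam c1p c2p Hfin HM1 HM2 x T T' a x0 a1 /andP[aT Ta] /andP[aT' T'a].
have a0 : 0 < a by apply: lt_le_trans a1.
have Bf : finite_set [set n | lam n <= a + 1] := Hfin _.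
have w0 : forall n, 0 <= cabs (z n).
  by move=> n; rewrite /cabs /Normc.normc; case: (z n) => ? ?; exact: sqrtr_ge0.
have SB : [set n | a < lam n <= a + 1] `<=` [set n | lam n <= a + 1].
  by move=> n /= /andP[].
have i0 : forall n, 0 <= (if n \in [set n | a < lam n <= a + 1] then 1 else 0 : R) <= 1.
  by move=> n; case: ifP => _; rewrite ?lexx ?ler01.
have ig : forall b : bool, 0 <= (if b then 1 else 0 : R) by case; rewrite ?ler01 ?lexx.
have stepA : cabs (Ssum z lam x T' - Ssum z lam x T) <=
    x `^ 2^-1 / a * \sum_(n <- fset_set [set n | lam n <= a + 1])
       ((if n \in [set n | a < lam n <= a + 1] then 1 else 0) * cabs (z n)).
  have sub1 : [set n | lam n <= T'] `<=` [set n | lam n <= a + 1].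
    by move=> n /= h; exact: le_trans h T'a.
  have sub2 : [set n | lam n <= T] `<=` [set n | lam n <= a + 1].
    by move=> n /= h; exact: le_trans h Ta.
  rewrite /Ssum (@fsum_widen _ _ _ _ Bf sub1) (@fsum_widen _ _ _ _ Bf sub2) -sumrB /cabs.
  apply: le_trans (normc_sum _ _ _) _.
  rewrite mulr_sumr; apply: ler_sum => n _.
  rewrite !memsetb.
  have hg := @normc_term _ (z n) x (lam n) x0 (Hlam n).
  have xs0 : 0 <= x `^ 2^-1 / a by rewrite divr_ge0 ?powR_ge0 // ltW.
  case: (leP (lam n) a) => h1.
    rewrite (le_trans h1 aT') (le_trans h1 aT) subrr Normc.normc0.
    by rewrite /= mul0r mulr0.
  case: (leP (lam n) (a + 1)) => h2.
    rewrite /= ?mul1r.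
    have gb : Normc.normc (z n * cpowr x 2^-1 (lam n) / (2^-1 +i* lam n)%C)
               <= x `^ 2^-1 / a * Normc.normc (z n).
      apply: le_trans hg _.
      rewrite -mulrA [X in _ <= X]mulrC ler_wpM2l //; first exact: (w0 n).
      rewrite ler_wpM2l ?powR_ge0 //.
      by rewrite lef_pV2 ?posrE // ltW.
    by case: ifP; case: ifP => _ _; rewrite ?subrr ?subr0 ?sub0r ?normcN ?Normc.normc0 //; apply: mulr_ge0 => //; exact: w0.
  have h3 : (lam n <= a + 1) = false by apply/negbTE; rewrite -ltNge.
  rewrite /= ?mul0r ?mulr0.
  rewrite !ifF; first by rewrite subrr Normc.normc0.
    by apply/negbTE; rewrite -ltNge; exact: le_lt_trans Ta h2.
  by apply/negbTE; rewrite -ltNge; exact: le_lt_trans T'a h2.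

set r := fset_set [set n | lam n <= a + 1] in stepA.
set io := (fun n : nat => if n \in [set n | a < lam n <= a + 1] then 1 else 0 : R) in stepA i0.
set P := (a + 1) `^ (c1 / 2).
set Q := (ln a) `^ (c2 / 2).
set K2 := `|M1| + `|M2|.
have ln0 : 0 <= ln a := ln_ge0 a1.
have Pp : 0 < P by rewrite powR_gt0 // addr_gt0.
have Q0 : 0 <= Q by rewrite powR_ge0.
have h1 := HM1 (a + 1) (ler_wpDr ler01 a1).
rewrite fsbig_finite // -/r in h1.
have h2 := HM2 a a1.
rewrite (@fsum_widen _ _ _ _ Bf SB) -/r in h2.
have stepB : \sum_(n <- r) io n * cabs (z n) <= K2 * P * Q / 2.
  case: (eqVneq (ln a) 0) => hl.
    have -> : Q = 0 by rewrite /Q hl powR0 // mulf_neq0 // ?invr_eq0 gt_eqF.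
    rewrite mulr0 mul0r.
    have hW : \sum_(n <- r) io n * cabs (z n) <= \sum_(n <- r) io n * \sum_(m <- r) cabs (z m).
      rewrite big_seq_cond [X in _ <= X]big_seq_cond; apply: ler_sum => n /andP[nr _].
      move: (i0 n) => /andP[io0 _]; apply: ler_wpM2l => //.
      by rewrite (bigD1_seq n) //= lerDl sumr_ge0.
    apply: le_trans hW _; rewrite -mulr_suml.
    apply: mulr_le0_ge0; last by rewrite sumr_ge0.
    apply: le_trans h2 _.
    by rewrite hl powR0 ?mulr0 // gt_eqF.
  have lnp : 0 < ln a by rewrite lt_def hl ln0.
  have Qp : 0 < Q by rewrite powR_gt0.
  set k := P / Q.
  have kp : 0 < k by rewrite divr_gt0.
  have hk : forall n, 2 * k * (io n * cabs (z n)) <= cabs (z n) ^+ 2 + k ^+ 2 * io n.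
    move=> n; move: (i0 n) (w0 n) => /andP[i1 i2] wn.
    have e1 : 0 <= io n * (cabs (z n) - k) ^+ 2 by rewrite mulr_ge0 // sqr_ge0.
    have e2 : 0 <= (1 - io n) * cabs (z n) ^+ 2 by rewrite mulr_ge0 ?subr_ge0 // sqr_ge0.
    nra.
  have hs : 2 * k * \sum_(n <- r) io n * cabs (z n)
      <= \sum_(n <- r) cabs (z n) ^+ 2 + k ^+ 2 * \sum_(n <- r) io n.
    by rewrite !mulr_sumr -big_split; apply: ler_sum => n _; exact: hk.
  have eP : (a + 1) `^ c1 = P ^+ 2.
    rewrite /P -powR_mulrn ?powR_ge0 // -powRrM; congr (_ `^ _).
    by rewrite mulfVK // pnatr_eq0.
  have eQ : (ln a) `^ c2 = Q ^+ 2.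
    rewrite /Q -powR_mulrn ?powR_ge0 // -powRrM; congr (_ `^ _).
    by rewrite mulfVK // pnatr_eq0.
  rewrite eP in h1; rewrite eQ in h2.
  have h3 : 2 * k * \sum_(n <- r) io n * cabs (z n) <= K2 * P ^+ 2.
    apply: le_trans hs _.
    have hM1 : M1 * P ^+ 2 <= `|M1| * P ^+ 2 by rewrite ler_wpM2r ?sqr_ge0 // ler_norm.
    have hM2 : M2 * Q ^+ 2 <= `|M2| * Q ^+ 2 by rewrite ler_wpM2r ?sqr_ge0 // ler_norm.
    have -> : K2 * P ^+ 2 = `|M1| * P ^+ 2 + k ^+ 2 * (`|M2| * Q ^+ 2).
      rewrite /K2 /k; field; exact: lt0r_neq0.
    apply: lerD; first exact: le_trans h1 hM1.
    by apply: ler_wpM2l; [exact: sqr_ge0 | exact: le_trans h2 hM2].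
  rewrite -(ler_pM2l (_ : 0 < 2 * k)); last by rewrite mulr_gt0.
  have -> : 2 * k * (K2 * P * Q / 2) = K2 * P ^+ 2.
    rewrite /k; field; exact: lt0r_neq0.
  exact: h3.
set e := (c1 - 2) / 2.
set L := (ln T) `^ (c2 / 2).
have Qe : Q <= L.
  have T1 : 1 <= T by exact: le_trans a1 aT.
  apply: ge0_ler_powR; rewrite ?nnegrE.
  - by rewrite divr_ge0 // ltW.
  - exact: ln_ge0.
  - exact: ln_ge0.
  - by rewrite ler_ln ?posrE // (lt_le_trans a0).
have he : (a + 1) `^ e <= (1 + 2 `^ e) * T `^ e.
  have T0 : 0 < T by apply: lt_le_trans a0 aT.
  case: (leP 0 e) => he0.
    apply: (@le_trans _ _ ((2 * T) `^ e)).
      by apply: ge0_ler_powR; rewrite ?nnegrE //; lra.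
    rewrite powRM; [|lra|lra].
    rewrite mulrDl mul1r; first [rewrite lerDl | rewrite lerDr]; exact: powR_ge0.
  apply: (@le_trans _ _ (T `^ e)); last by rewrite mulrDl mul1r; first [rewrite lerDl | rewrite lerDr]; rewrite mulr_ge0 ?powR_ge0.
  have hinv : forall y : R, y `^ e = (y `^ (- e))^-1 by move=> y; rewrite -powRN opprK.
  rewrite (hinv T) (hinv (a + 1)) lef_pV2 ?posrE ?powR_gt0 ?addr_gt0 //.
  by apply: ge0_ler_powR; rewrite ?nnegrE //; lra.
have Pe : P / a <= 2 * (1 + 2 `^ e) * T `^ e.
  have -> : P = (a + 1) `^ e * (a + 1).
    rewrite /P (_ : c1 / 2 = e + 1); last by rewrite /e; field.
    rewrite powRD; last by apply/implyP => _; rewrite gt_eqF // addr_gt0.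
    by rewrite powRr1 // addr_ge0 // ltW.
  have ha : (a + 1) / a <= 2 by rewrite ler_pdivrMr //; lra.
  rewrite -mulrA.
  have -> : 2 * (1 + 2 `^ e) * T `^ e = (1 + 2 `^ e) * T `^ e * 2 by ring.
  apply: ler_pM; [exact: powR_ge0 | by apply: divr_ge0; lra | exact: he | exact: ha].
have xs0 : 0 <= x `^ 2^-1 by rewrite powR_ge0.
apply: le_trans stepA _.
apply: le_trans (ler_wpM2l (divr_ge0 xs0 (ltW a0)) stepB) _.
have -> : x `^ 2^-1 / a * (K2 * P * Q / 2) = (x `^ 2^-1 * K2 / 2) * (P / a * Q) by ring.
have K0 : 0 <= K2 by rewrite addr_ge0.
apply: le_trans (ler_wpM2l _ (ler_pM _ Q0 Pe Qe)) _.
- by rewrite divr_ge0 // mulr_ge0.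
- by rewrite divr_ge0 // ltW.
have -> : x `^ 2^-1 * K2 / 2 * (2 * (1 + 2 `^ e) * T `^ e * L)
   = (1 + 2 `^ e) * K2 * (x `^ 2^-1 * T `^ e * L) by field.
by [].
Qed.


Theorem lemma4p4 (R : realType) (z : nat -> R[i]) (lam : nat -> R) (c1 c2 : R) :
  (forall n, 0 < lam n) ->
  0 < c1 -> 0 < c2 ->
  (forall t : R, finite_set [set n | lam n <= t]) ->
  (exists M1 : R, forall t : R, 1 <= t ->
     \sum_(n \in [set n | lam n <= t]) cabs (z n) ^+ 2 <= M1 * t `^ c1) ->
  (exists M2 : R, forall t : R, 1 <= t ->
     \sum_(n \in [set n | t < lam n <= t + 1]) (1 : R) <= M2 * (ln t) `^ c2) ->
  exists C : R, forall x T T' : R,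
    0 < x -> 1 <= T -> 1 <= T' -> `|T - T'| <= 1 ->
    cabs (Ssum z lam x T' - Ssum z lam x T)
      <= C * (x `^ 2^-1 * T `^ ((c1 - 2) / 2) * (ln T) `^ (c2 / 2)).
Proof.
move=> Hlam c1p c2p Hfin [M1 HM1] [M2 HM2].
exists ((1 + 2 `^ ((c1 - 2) / 2)) * (`|M1| + `|M2|)) => x T T' x0 T1 T'1 hTT.
move: hTT; rewrite ler_norml => /andP[d1 d2].
case: (leP T T') => h.
  by apply: (@core R z lam c1 c2 M1 M2 Hlam c1p c2p Hfin HM1 HM2 x T T' T) => //; apply/andP; split; lra.
by apply: (@core R z lam c1 c2 M1 M2 Hlam c1p c2p Hfin HM1 HM2 x T T' T') => //; apply/andP; split; lra.
Qed.
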